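(* The Diophantine equation $$x(x+1)\,y(y+1)=z(z+1)(z+2)(z+3)$$ has infinitely many solutions in positive integers $x,y,z$ satisfying $(z-x)(z-x+2)\neq 0$. *)

(* Defs.v *)
From Stdlib Require Import ZArith.
Open Scope Z_scope.

Definition good_solution (x y z : Z) : Prop :=
  0 < x /\ 0 < y /\ 0 < z /\
  x * (x + 1) * y * (y + 1) = z * (z + 1) * (z + 2) * (z + 3) /\
  (z - x) * (z - x + 2) <> 0.

(* Main.v *)
Require Import Defs.
From Stdlib Require Import ZArith Lia.
Open Scope Z_scope.

Fixpoint st (n : nat) : Z * Z :=
  match n with
  | O => (3, 7)
  | S k => let (a, c) := st k in (a + 2*c + 3, 2*a + 5*c + 7)
  end.

Definition Kf (a c : Z) : Z :=
  (2*c+3)^2 - 2*(2*a+1)*(2*c+3) - (2*a+1)^2 - 2.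

Lemma st_inv : forall n, let (a, c) := st n in
  0 < a /\ a < c /\ Kf a c = 0 /\ Z.of_nat n <= a.
Proof.
  induction n as [|n IH]; cbn [st].
  - unfold Kf; lia.
  - destruct (st n) as [a c]. destruct IH as [H1 [H2 [H3 H4]]].
    split; [lia|split; [lia|split; [|lia]]].
    rewrite <- H3. unfold Kf. ring.
Qed.

Theorem theorem3 :
  forall N : Z, exists x y z : Z, good_solution x y z /\ N < x + y + z.
Proof.
  intro N.
  pose proof (st_inv (Z.to_nat N)) as H.
  destruct (st (Z.to_nat N)) as [a c].
  destruct H as [H1 [H2 [H3 H4]]].
  exists a, (a + 2*c + 3), c.
  unfold good_solution. repeat split; try nia.
  assert (E : 16 * (a * (a + 1) * (a + 2*c + 3) * (a + 2*c + 3 + 1)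
                - c * (c + 1) * (c + 2) * (c + 3))
            = Kf a c * (Kf a c - 2*(2*c+3)^2 + 6)) by (unfold Kf; ring).
  rewrite H3 in E. lia.
Qed.
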